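(* Let $a$ be a positive integer and $n\in\mathbb{N}$ (with $0\in\mathbb{N}$). For $x>0$, $x\neq 1$, \[ \frac{d^n}{dx^n}\left(\log_x a\right)=\frac{d^n}{dx^n}\left(\frac{\ln a}{\ln x}\right)=(\log_x a)\,\frac{(-1)^n n!}{x^n}\sum_{\sum_i i y_{k,i}=n}\frac{\left(\sum_i y_{k,i}\right)!}{(\ln x)^{\sum_i y_{k,i}}}\prod_{i=1}^{n}\frac{1}{i^{y_{k,i}}\,y_{k,i}!}. \]
   Context: The sum runs over all partitions of $n$, each represented as a tuple $(y_{k,1},\ldots,y_{k,n})$ of non-negative integers with $\sum_{i=1}^n i\,y_{k,i}=n$; sums $\sum_i$ run over $i=1,\ldots,n$. For $n=0$ the only partition is the zero partition. *)

(* Defs.v *)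
From Stdlib Require Import Reals Factorial.
From Coquelicot Require Import Coquelicot.
From mathcomp Require Import ssreflect ssrfun ssrbool eqtype ssrnat seq fintype finfun bigop.

Definition logb (x a : R) : R := (ln a / ln x)%R.

(* A partition of n is encoded as y : {ffun 'I_n -> 'I_n.+1}, where y i is the
   multiplicity y_{i+1} of the part i+1 (each multiplicity is at most n, so the
   bound n.+1 loses nothing), subject to  sum_i (i+1) * y_{i+1} = n. *)
Definition is_partition {n : nat} (y : {ffun 'I_n -> 'I_n.+1}) : bool :=
  (\sum_(i < n) i.+1 * y i)%N == n.

Definition nparts {n : nat} (y : {ffun 'I_n -> 'I_n.+1}) : nat :=
  (\sum_(i < n) (y i : nat))%N.

Definition partition_sum (n : nat) (x : R) : R :=
  \big[Rplus/0%R]_(y : {ffun 'I_n -> 'I_n.+1} | is_partition y)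
    (INR (Factorial.fact (nparts y)) / pow (ln x) (nparts y) *
     \big[Rmult/1%R]_(i < n)
        Rinv (pow (INR i.+1) (y i) * INR (Factorial.fact (y i))))%R.

(* Main.v *)
Require Import Defs.
From Stdlib Require Import Reals Factorial Lra.
From Coquelicot Require Import Coquelicot.
From HB Require Import structures.
From mathcomp Require ssreflect ssrfun ssrbool eqtype ssrnat seq fintype finfun bigop zify.

Module M.
Import ssreflect ssrfun ssrbool eqtype ssrnat seq fintype finfun bigop zify.

HB.instance Definition _ := Monoid.isComLaw.Build R 0%R Rplus (fun x y z => esym (Rplus_assoc x y z)) Rplus_comm Rplus_0_l.
HB.instance Definition _ := Monoid.isComLaw.Build R 1%R Rmult (fun x y z => esym (Rmult_assoc x y z)) Rmult_comm Rmult_1_l.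
HB.instance Definition _ := Monoid.isMulLaw.Build R 0%R Rmult Rmult_0_l Rmult_0_r.
HB.instance Definition _ := Monoid.isAddLaw.Build R Rmult Rplus Rmult_plus_distr_r Rmult_plus_distr_l.

Lemma INR_sum I (r : seq I) (P : pred I) (f : I -> nat) :
  INR (\sum_(i <- r | P i) f i) = \big[Rplus/0%R]_(i <- r | P i) INR (f i).
Proof. by apply: (big_morph INR plus_INR). Qed.

Fixpoint a (s m : nat) : R :=
  match s with
  | 0 => if m is 0 then 1%R else 0%R
  | S s' => ((INR s' * a s' m + (if m is S m' then a s' m' else 0)) / INR (S s'))%R
  end.

Lemma a_S0 s : a s.+1 0 = 0%R.
Proof.
elim: s => [|s IH]; first by simpl; field.
change (a s.+2 0) with ((INR s.+1 * a s.+1 0 + 0) / INR s.+2)%R.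
rewrite IH; field; exact: not_0_INR.
Qed.

Lemma a_rec s m : (INR s * a s m.+1 = \big[Rplus/0%R]_(j < s) a j m)%R.
Proof.
elim: s => [|s IH]; first by rewrite big_ord0 Rmult_0_l.
rewrite big_ord_recr /= -IH.
have H : INR s.+1 <> 0%R by apply: not_0_INR.
rewrite -/(INR s.+1). field. exact H.
Qed.


Section Part.
Local Open Scope nat_scope.
Variable n : nat.
Local Notation FT := {ffun 'I_n -> 'I_n.+1}.

Definition wsum (y : FT) : nat := \sum_(i < n) i.+1 * y i.
Definition w (y : FT) : R :=
  \big[Rmult/1%R]_(i < n) Rinv (pow (INR i.+1) (y i) * INR (Factorial.fact (y i))).
Definition A (s m : nat) : R :=
  \big[Rplus/0%R]_(y : FT | (wsum y == s) && (nparts y == m)) w y.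

Lemma wsum_ge (y : FT) (i : 'I_n) : (i.+1 * y i <= wsum y)%N.
Proof. by rewrite /wsum (bigD1 i) //= leq_addr. Qed.

Lemma nparts0 (y : FT) : nparts y = 0 -> y = [ffun => ord0].
Proof.
move=> H; apply/ffunP => i; rewrite ffunE; apply/val_inj => /=.
have : ((y i : nat) <= nparts y)%N by rewrite /nparts (bigD1 i) //= leq_addr.
by rewrite H leqn0 => /eqP.
Qed.

Lemma wsum0 (y : FT) : wsum y = 0 -> y = [ffun => ord0].
Proof.
move=> H; apply/ffunP => i; rewrite ffunE; apply/val_inj => /=.
have := wsum_ge y i; rewrite H leqn0 muln_eq0 /= => /eqP //.
Qed.

Lemma y0_sums : wsum [ffun => ord0] = 0 /\ nparts ([ffun => ord0] : FT) = 0 /\ w [ffun => ord0] = 1%R.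
Proof.
split; first by rewrite /wsum big1 // => i _; rewrite ffunE muln0.
split; first by rewrite /nparts big1 // => i _; rewrite ffunE.
rewrite /w big1 // => i _; rewrite ffunE /=; rewrite Rmult_1_l; exact: Rinv_1.
Qed.

Lemma A0 m : A 0 m = if m is 0 then 1%R else 0%R.
Proof.
rewrite /A; case: m => [|m].
  rewrite (big_pred1 [ffun => ord0]); first by case: y0_sums => _ [].
  move=> y /=; apply/andP/eqP => [[/eqP/wsum0 //] | Hy]; subst y.
  by case: y0_sums => -> [-> _].
rewrite big_pred0 // => y; apply/negP => /andP [/eqP /wsum0 -> ].
by case: y0_sums => _ [-> _].
Qed.

Lemma AS0 s : A s.+1 0 = 0%R.
Proof.
rewrite /A big_pred0 // => y; apply/negP => /andP [/eqP Hs /eqP /nparts0 Hy].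
by move: Hs; rewrite Hy; case: y0_sums => -> _.
Qed.


Definition inc (i : 'I_n) (y : FT) : FT :=
  [ffun j => if j == i then inord (y j).+1 else y j].
Definition dec (i : 'I_n) (y : FT) : FT :=
  [ffun j => if j == i then inord (y j).-1 else y j].

Lemma inc_val i (y : FT) : y i < n -> forall j, (inc i y j : nat) = y j + (j == i).
Proof.
move=> H j; rewrite ffunE; case: eqP => [->|_]; last by rewrite addn0.
by rewrite inordK // addn1.
Qed.

Lemma inc_n i (y : FT) : ~~ (y i < n) -> (inc i y i : nat) = 0.
Proof.
move=> H; rewrite ffunE eqxx /inord /insubd insubF //.
have := ltn_ord (y i); rewrite ltnS; move: H; rewrite -leqNgt => H1 H2.
have -> : (y i : nat) = n by apply/eqP; rewrite eqn_leq H1 H2.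
by rewrite ltnn.
Qed.

Lemma wsum_inc i (y : FT) : y i < n -> wsum (inc i y) = wsum y + i.+1.
Proof.
move=> H; rewrite /wsum (bigD1 i) //= [in RHS](bigD1 i) //= inc_val // eqxx.
rewrite (eq_bigr (fun j : 'I_n => j.+1 * y j)); last first.
  by move=> j /negbTE Hj; rewrite inc_val // Hj addn0.
rewrite addn1 mulnS; lia.
Qed.

Lemma nparts_inc i (y : FT) : y i < n -> nparts (inc i y) = (nparts y).+1.
Proof.
move=> H; rewrite /nparts (bigD1 i) //= [in RHS](bigD1 i) //= inc_val // eqxx.
rewrite (eq_bigr (fun j : 'I_n => (y j : nat))); last first.
  by move=> j /negbTE Hj; rewrite inc_val // Hj addn0.
by rewrite addn1 addSn.
Qed.

Lemma dec_inc i (y : FT) : y i < n -> dec i (inc i y) = y.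
Proof.
move=> H; apply/ffunP => j; rewrite ffunE; case: eqP => [->|Hj].
  by apply/val_inj; rewrite /= inc_val // eqxx addn1 /= inordK.
by rewrite ffunE; case: eqP.
Qed.

Lemma inc_dec i (y : FT) : 0 < y i -> inc i (dec i y) = y.
Proof.
move=> H; apply/ffunP => j; rewrite ffunE; case: eqP => [->|Hj].
  apply/val_inj; rewrite /= ffunE eqxx.
  have h1 : ((inord (y i).-1 : 'I_n.+1) : nat) = (y i).-1.
    by rewrite inordK //; have := ltn_ord (y i); lia.
  rewrite h1.
  by rewrite prednK // inordK.
by rewrite ffunE; case: eqP.
Qed.

Lemma w_inc i (y : FT) : y i < n ->
  (INR (i.+1 * inc i y i) * w (inc i y) = w y)%R.
Proof.
move=> H; rewrite /w (bigD1 i) //= [in RHS](bigD1 i) //=.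
rewrite (eq_bigr (fun j : 'I_n => Rinv (pow (INR j.+1) (y j) * INR (Factorial.fact (y j))))); last first.
  by move=> j /negbTE Hj; rewrite ffunE Hj.
rewrite inc_val // eqxx addn1 -Rmult_assoc; congr (_ * _)%R.
have h1 : INR i.+1 <> 0%R by apply: not_0_INR.
have h2 := INR_fact_neq_0 (y i).
have h3 : pow (INR i.+1) (y i) <> 0%R by apply: pow_nonzero.
rewrite mult_INR fact_simpl mult_INR /=.
rewrite -/(INR (y i).+1). have h4 : INR (y i).+1 <> 0%R by apply: not_0_INR.
field; repeat split => //.
Qed.

Lemma key (i : 'I_n) s m : i.+1 <= s -> s <= n ->
  \big[Rplus/0%R]_(y : FT | (wsum y == s) && (nparts y == m.+1))
     (INR (i.+1 * y i) * w y)%R = A (s - i.+1) m.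
Proof.
move=> Hi Hs.
rewrite (bigID (fun y : FT => 0 < y i)) /=.
rewrite [X in (_ + X)%R]big1 ?Rplus_0_r; last first.
  move=> y /andP [_]; rewrite -eqn0Ngt => /eqP ->; rewrite muln0 /=.
  exact: Rmult_0_l.
rewrite (reindex_onto (inc i) (dec i)) /=; last first.
  by move=> y /andP [_ Hy]; exact: inc_dec.
rewrite /A; apply: eq_big => y.
  case: (ltnP (y i) n) => Hy.
    rewrite wsum_inc // nparts_inc // dec_inc // eqxx andbT inc_val // eqxx addn1 andbT eqSS.
    congr andb; apply/eqP/eqP; lia.
  rewrite inc_n; last by rewrite -leqNgt.
  rewrite ltnn andbF /=; symmetry; apply/negbTE; apply/nandP; left.
  apply/eqP => E; have := wsum_ge y i; rewrite E; nia.
move=> /andP [/andP [_ Hpos] _].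
case: (ltnP (y i) n) => Hy; first exact: w_inc.
by move: Hpos; rewrite inc_n // -leqNgt.
Qed.

Lemma A_rec s m : s <= n -> (INR s * A s m.+1 = \big[Rplus/0%R]_(j < s) A j m)%R.
Proof.
move=> Hs.
rewrite /A big_distrr /=.
transitivity (\big[Rplus/0%R]_(y : FT | (wsum y == s) && (nparts y == m.+1))
   \big[Rplus/0%R]_(i < n) (INR (i.+1 * y i) * w y)%R).
  apply: eq_bigr => y /andP [/eqP Hy _].
  by rewrite -big_distrl /= -INR_sum -/(wsum y) Hy.
rewrite exchange_big /=.
transitivity (\big[Rplus/0%R]_(i < n) (if i.+1 <= s then A (s - i.+1) m else 0%R)).
  apply: eq_bigr => i _; case: ifP => H; first exact: key.
  apply: big1 => y /andP [/eqP Hy _].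
  have := wsum_ge y i; rewrite Hy => H2.
  have -> : (y i : nat) = 0 by move/negbT: H; rewrite -ltnNge; nia.
  by rewrite muln0 /= Rmult_0_l.
rewrite -big_mkcond /= -(big_ord_widen _ (fun i => A (s - i.+1) m) Hs).
rewrite [RHS](_ : _ = \big[Rplus/0%R]_(0 <= j < s) A j m); last by rewrite big_mkord.
by rewrite big_rev_mkord subn0.
Qed.

Lemma A_eq s m : s <= n -> A s m = a s m.
Proof.
elim: s {-2}s (leqnn s) m => [|S IH] s.
  rewrite leqn0 => /eqP -> m _; rewrite A0; by case: m.
rewrite leq_eqVlt => /orP [/eqP ->|]; last by rewrite ltnS; apply: IH.
move=> m Hn; case: m => [|m]; first by rewrite AS0 a_S0.
have h : INR S.+1 <> 0%R by apply: not_0_INR.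
apply: (Rmult_eq_reg_l (INR S.+1)) => //.
rewrite A_rec // a_rec; apply: eq_bigr => j _; apply: IH => //.
  by rewrite -ltnS; exact: ltn_ord.
have := ltn_ord j; lia.
Qed.

End Part.

Lemma d_term n m y : 0<y -> ln y <> 0 -> is_derive (fun t => (/t)^n * (/ln t)^(S m)) y (-(INR n) * (/y)^(S n) * (/ln y)^(S m) - INR (S m) * (/y)^(S n) * (/ln y)^(S (S m))).
Proof.
intros hy hl.
assert (H1 : is_derive (fun t => / t) y (- / y^2)).
{ auto_derive. apply Rgt_not_eq; lra. field. apply Rgt_not_eq; lra. }
assert (H2 : is_derive (fun t => / ln t) y (- / y / (ln y)^2)).
{ auto_derive. split; [exact hy | split; [exact hl | exact I]]. field. split; [apply Rgt_not_eq; lra | exact hl]. }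
pose proof (is_derive_mult _ _ _ _ _ (is_derive_pow _ n _ _ H1) (is_derive_pow _ (S m) _ _ H2) Rmult_comm) as H.
match goal with |- is_derive _ _ ?l => match type of H with is_derive _ _ ?l' => replace l with l'; [exact H|] end end.
destruct n as [|k]; rewrite !S_INR; unfold plus, mult; simpl; unfold AbelianMonoid.plus, Ring.mult; simpl.
- field. split; [exact hl | apply Rgt_not_eq; lra].
- generalize ((/ y) ^ k) ((/ ln y) ^ m); intros P Q. field. split; [exact hl | apply Rgt_not_eq; lra].
Qed.

Lemma psum_eq n x : partition_sum n x =
  \big[Rplus/0%R]_(m < n.+1) (INR (Factorial.fact m) / pow (ln x) m * a n m)%R.
Proof.
rewrite /partition_sum (partition_big (fun y : {ffun 'I_n -> 'I_n.+1} => (inord (nparts y) : 'I_n.+1)) xpredT) //=.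
apply: eq_bigr => j _.
rewrite -(@A_eq n n j (leqnn n)) /A big_distrr /=.
have Hle : forall y : {ffun 'I_n -> 'I_n.+1}, is_partition y -> (nparts y <= n)%N.
  move=> y /eqP Hy; rewrite -[X in (_ <= X)%N]Hy /nparts; apply: leq_sum => i _.
  exact: leq_pmull.
apply: eq_big => y.
  rewrite /is_partition -/(wsum n y).
  case Hp: (wsum n y == n) => //=.
  have := Hle y Hp; move=> Hl.
  apply/eqP/eqP => [<-|E]; first by rewrite inordK ?ltnS.
  by apply/val_inj; rewrite /= inordK ?ltnS.
move=> /andP [Hp /eqP Hj].
have -> : nparts y = j.
  by rewrite -Hj inordK // ltnS; apply: Hle.
by [].
Qed.

Lemma is_derive_big K (f : nat -> R -> R) (df : nat -> R) y :
  (forall m, is_derive (f m) y (df m)) ->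
  is_derive (fun t => \big[Rplus/0%R]_(m < K) f m t) y (\big[Rplus/0%R]_(m < K) df m).
Proof.
move=> H; elim: K => [|K IH].
  apply: (is_derive_ext (fun _ => 0%R)); first by move=> t; rewrite big_ord0.
  rewrite big_ord0; exact: (is_derive_const 0%R y).
apply: (is_derive_ext (fun t => \big[Rplus/0%R]_(m < K) f m t + f K t)%R).
  by move=> t; rewrite big_ord_recr.
rewrite big_ord_recr /=; exact: (is_derive_plus _ _ _ _ _ IH (H K)).
Qed.

Definition c n m : R := (INR (Factorial.fact n) * a n m * INR (Factorial.fact m))%R.
Definition g (L : R) n (t : R) : R :=
  (L * (-1)^n * \big[Rplus/0%R]_(m < n.+1) (c n m * ((/t)^n * (/ln t)^(S m))))%R.

Lemma a_big n m : (n < m)%N -> a n m = 0%R.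
Proof.
elim: n m => [|n IH] [|m] //= H.
rewrite IH // ?IH //; first by rewrite Rmult_0_r Rplus_0_l /Rdiv Rmult_0_l.
by apply: ltnW.
Qed.

Lemma c_rec0 n : c n.+1 0 = (INR n * c n 0)%R.
Proof.
rewrite /c fact_simpl mult_INR /=.
have h : INR n.+1 <> 0%R by apply: not_0_INR.
rewrite -/(INR n.+1); field; exact h.
Qed.

Lemma c_recS n m : c n.+1 m.+1 = (INR n * c n m.+1 + INR m.+1 * c n m)%R.
Proof.
rewrite /c fact_simpl mult_INR.
change (a n.+1 m.+1) with ((INR n * a n m.+1 + a n m) / INR n.+1)%R.
rewrite [Factorial.fact m.+1]fact_simpl mult_INR.
have h : INR n.+1 <> 0%R by apply: not_0_INR.
field; exact h.
Qed.

Lemma sum_id n u X :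
  \big[Rplus/0%R]_(m < n.+2) (c n.+1 m * (X * u^(S m)))%R =
  \big[Rplus/0%R]_(m < n.+1) (c n m * (INR n * X * u^(S m) + INR (S m) * X * u^(S (S m))))%R.
Proof.
pose F m := (c n m * (INR n * X * u^(S m)))%R.
pose G m := (c n m * (INR (S m) * X * u^(S (S m))))%R.
transitivity (c n.+1 0 * (X * u^1) + \big[Rplus/0%R]_(m < n.+1) (F m.+1 + G m))%R.
  rewrite big_ord_recl; congr (_ + _)%R; apply: eq_bigr => i _.
  have -> : (lift ord0 i : nat) = i.+1 by []. rewrite /F /G c_recS; ring.
rewrite [RHS](eq_bigr (fun m : 'I_n.+1 => F m + G m)%R); last by move=> i _; rewrite /F /G; ring.
rewrite !big_split.
have E1 : \big[Rplus/0%R]_(m < n.+1) F m.+1 = (\big[Rplus/0%R]_(m < n) F m.+1 + F n.+1)%R.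
  rewrite big_ord_recr; reflexivity.
have E2 : \big[Rplus/0%R]_(m < n.+1) F m = (F 0%N + \big[Rplus/0%R]_(m < n) F m.+1)%R.
  rewrite big_ord_recl; reflexivity.
have E3 : (c n.+1 0 * (X * u^1) = F 0%N)%R by rewrite c_rec0 /F; ring.
have E4 : F n.+1 = 0%R by rewrite /F /c a_big // Rmult_0_r Rmult_0_l Rmult_0_l.
rewrite E1 E2 E3 E4 /=; ring.
Qed.

Lemma dg L n y : (0 < y)%R -> ln y <> 0%R -> is_derive (g L n) y (g L n.+1 y).
Proof.
move=> hy hl.
have H := is_derive_scal _ y (L * (-1)^n)%R _ (is_derive_big n.+1
  (fun m t => c n m * ((/t)^n * (/ln t)^(S m)))%R
  (fun m => c n m * (-(INR n) * (/y)^(S n) * (/ln y)^(S m) - INR (S m) * (/y)^(S n) * (/ln y)^(S (S m))))%R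
  y (fun m => is_derive_scal _ _ _ _ (d_term n m y hy hl))).
rewrite /g.
suff E : (L * (-1)^n * \big[Rplus/0%R]_(m < n.+1) (c n m * (-(INR n) * (/y)^(S n) * (/ln y)^(S m) - INR (S m) * (/y)^(S n) * (/ln y)^(S (S m)))))%R
  = (L * (-1)^n.+1 * \big[Rplus/0%R]_(m < n.+2) (c n.+1 m * ((/y)^(S n) * (/ln y)^(S m))))%R.
  by rewrite -E; exact: H.
rewrite sum_id.
rewrite (eq_bigr (fun m : 'I_n.+1 => (-1) * (c n m * (INR n * (/ y) ^ S n * (/ ln y) ^ S m +
    INR (S m) * (/ y) ^ S n * (/ ln y) ^ S (S m))))%R); last by move=> i _; ring.
rewrite -big_distrr /=; ring.
Qed.

Lemma loc_D y : (0 < y)%R -> y <> 1%R -> locally y (fun t => 0 < t /\ t <> 1)%R.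
Proof. move=> h1 h2; apply: (open_and _ _ (open_gt 0) (open_neq 1)); by split. Qed.

Lemma Dn_eq L n : forall y, (0 < y)%R -> y <> 1%R ->
  Derive_n (fun t => L / ln t)%R n y = g L n y.
Proof.
elim: n => [|n IH] y hy h1.
  rewrite /= /g big_ord_recl big_ord0 /c /=; field; exact: ln_neq_0.
rewrite /=.
rewrite (Derive_ext_loc _ (g L n)); last first.
  apply (filter_imp (fun t => 0 < t /\ t <> 1)%R); [move=> t [ht1 ht2]; exact: IH | exact: (loc_D y hy h1)].
apply: is_derive_unique; apply: dg => //; exact: ln_neq_0.
Qed.

Lemma target_eq (A : R) n x : (0 < x)%R -> x <> 1%R ->
  (logb x A * (pow (-1) n * INR (Factorial.fact n) / pow x n) * partition_sum n x)%R = g (ln A) n x.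
Proof.
move=> hx h1; have hl := ln_neq_0 x h1 hx.
rewrite psum_eq /g big_distrr [RHS]big_distrr /=; apply: eq_bigr => m _.
rewrite /logb /c !pow_inv.
have h2 : pow x n <> 0%R by apply: pow_nonzero; lra.
have h3 : pow (ln x) m <> 0%R by apply: pow_nonzero.
rewrite /=; field; repeat split => //.
Qed.

Lemma main_aux (A : R) n x : (0 < x)%R -> x <> 1%R ->
  is_derive_n (fun t => logb t A) n x
    (logb x A * (pow (-1) n * INR (Factorial.fact n) / pow x n) * partition_sum n x)%R.
Proof.
move=> hx h1; rewrite target_eq //.
case: n => [|n] /=.
  exact: (Dn_eq (ln A) 0 x hx h1).
apply: (is_derive_ext_loc (g (ln A) n)).
  apply (filter_imp (fun t => 0 < t /\ t <> 1)%R); last exact: (loc_D x hx h1).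
  move=> t [ht1 ht2].
  exact: (esym (Dn_eq (ln A) n t ht1 ht2)).
apply: dg => //; exact: ln_neq_0.
Qed.

End M.

Theorem proposition4p4 (a n : nat) (x : R) :
  (0 < a)%nat -> (0 < x)%R -> x <> 1%R ->
  is_derive_n (fun t => logb t (INR a)) n x
    (logb x (INR a) * (pow (-1) n * INR (Factorial.fact n) / pow x n) * partition_sum n x)%R.
Proof.
  intros _ hx h1. exact (M.main_aux (INR a) n x hx h1).
Qed.
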